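(* Every metacyclic subgroup of a finite symmetric group $S_m$ contains at most $4$ transpositions, and this bound is attained: the metacyclic subgroup $\langle (1\,2\,3)(4\,5),(1\,2)\rangle\le S_5$ contains exactly the four transpositions $(1\,2),(2\,3),(1\,3),(4\,5)$.
   Context: A group is metacyclic if it has a cyclic normal subgroup with cyclic quotient. *)

(* Defs.v *)
From HB Require Import structures.
From mathcomp Require Import all_boot all_order all_algebra all_fingroup all_solvable.
Set Implicit Arguments. Unset Strict Implicit. Unset Printing Implicit Defensive.

Definition is_transposition (T : finType) (t : {perm T}) : bool :=
  [exists x : T, exists y : T, (x != y) && (t == tperm x y)].

Definition transpositions_in (T : finType) (G : {set {perm T}}) : {set {perm T}} :=
  [set t in G | is_transposition t].

(* Points 1..5 of S_5, encoded 0-based as elements of 'I_5. *)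
Definition pt5 (k : nat) : 'I_5 := inord k.

(* (1 2 3)(4 5) and (1 2) in 1-based notation, i.e. (0 1 2)(3 4) and (0 1). *)
Definition gen_a : {perm 'I_5} :=
  tperm (pt5 0) (pt5 1) * tperm (pt5 1) (pt5 2) * tperm (pt5 3) (pt5 4).
Definition gen_b : {perm 'I_5} := tperm (pt5 0) (pt5 1).
Definition example_group : {group {perm 'I_5}} := <<[set gen_a; gen_b]>>%G.

(* Main.v *)
Require Import Defs.
From HB Require Import structures.
From mathcomp Require Import all_boot all_order all_algebra all_fingroup all_solvable.
Set Implicit Arguments. Unset Strict Implicit. Unset Printing Implicit Defensive.
Local Open Scope group_scope.

Lemma order_prime (gT : finGroupType) (x : gT) p :
  prime p -> x ^+ p = 1 -> x != 1 -> #[x] = p.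
Proof.
move=> pp xp nx; have /primeP[_ H] := pp.
have := H _ (etrans (order_dvdn x p) (introT eqP xp)).
by case/orP=> /eqP // o1; move: nx; rewrite -order_eq1 o1.
Qed.

Lemma uniq_prime_elt (gT : finGroupType) (C : {group gT}) p x y :
  cyclic C -> prime p -> x \in C -> y \in C -> x ^+ p = 1 -> y ^+ p = 1 ->
  y != 1 -> x \in <[y]>.
Proof.
move=> cC pp xC yC xp yp ny.
have [-> | nx] := eqVneq x 1; first exact: group1.
have ox := order_prime pp xp nx; have oy := order_prime pp yp ny.
have: (<[x]> :==: <[y]>) by rewrite (eq_subG_cyclic cC) ?cycle_subG // -/(#[x]) -/(#[y]) ox oy.
by move/eqP <-; apply: cycle_id.
Qed.

Lemma card_prime_sol (gT : finGroupType) (C : {group gT}) p :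
  cyclic C -> prime p -> #|[set x in C | x ^+ p == 1]| <= p.
Proof.
move=> cC pp.
have [y /and3P[yC /eqP yp ny] | H] := pickP (fun y => [&& y \in C, y ^+ p == 1 & y != 1]).
  have sub : [set x in C | x ^+ p == 1] \subset <[y]>.
    apply/subsetP=> x /setIdP[xC /eqP xp]; exact: uniq_prime_elt cC pp xC yC xp yp ny.
  by rewrite (leq_trans (subset_leq_card sub)) // -[#|<[y]>|]/#[y] (order_prime pp yp ny).
apply: (leq_trans _ (ltnW (prime_gt1 pp))); rewrite -(cards1 (1 : gT)); apply: subset_leq_card.
apply/subsetP=> x /setIdP[xC xp]; rewrite inE; have := H x; rewrite xC xp /=.
by move/negbFE.
Qed.

Lemma tp3 (T : finType) (a b d : T) : a != b -> b != d -> a != d ->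
  (tperm a b * tperm b d) ^+ 3 = 1.
Proof.
move=> ab bd ad; have ba : b != a by rewrite eq_sym.
have da : d != a by rewrite eq_sym.
apply/permP=> x; rewrite !expgS expg0 mulg1 !permM perm1.
case: (tpermP a b x) => [->|->|/eqP xa /eqP xb].
- by rewrite !(tpermL, tpermR, tpermD ad bd, tpermD ba da).
- by rewrite !(tpermL, tpermR, tpermD ad bd, tpermD ba da).
have [->|xd] := eqVneq x d.
  by rewrite !(tpermL, tpermR, tpermD ad bd, tpermD ba da).
have ax : a != x by rewrite eq_sym.
have bx : b != x by rewrite eq_sym.
have dx : d != x by rewrite eq_sym.
by rewrite !(tpermD ax bx, tpermD bx dx).
Qed.

Lemma tp2 (T : finType) (a b c d : T) : a != c -> a != d -> b != c -> b != d ->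
  (tperm a b * tperm c d) ^+ 2 = 1.
Proof.
move=> ac ad bc bd.
have ca : c != a by rewrite eq_sym.
have da : d != a by rewrite eq_sym.
have cb : c != b by rewrite eq_sym.
have db : d != b by rewrite eq_sym.
have comm : tperm a b * tperm c d = tperm c d * tperm a b.
  apply/permP=> x; rewrite !permM.
  case: (tpermP a b x) => [->|->|/eqP xa /eqP xb];
    try by rewrite !(tpermL, tpermR, tpermD ca da, tpermD cb db, tpermD ac bc, tpermD ad bd).
  case: (tpermP c d x) => [_|_|/eqP xc /eqP xd];
    try by rewrite !(tpermL, tpermR, tpermD ca da, tpermD cb db, tpermD ac bc, tpermD ad bd).
  have ax : a != x by rewrite eq_sym.
  have bx : b != x by rewrite eq_sym.
  have cx : c != x by rewrite eq_sym.
  have dx : d != x by rewrite eq_sym.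
  by rewrite !(tpermD ax bx, tpermD cx dx).
rewrite expgS expg1 {2}comm mulgA -(mulgA (tperm a b)) tperm2 mulg1 tperm2 //.
Qed.

Lemma uniq_inv2 (gT : finGroupType) (C : {group gT}) x y :
  cyclic C -> x \in C -> y \in C -> x ^+ 2 = 1 -> y ^+ 2 = 1 ->
  x != 1 -> y != 1 -> x = y.
Proof.
move=> cC xC yC x2 y2 nx ny.
move: nx; have /cycleP[i ->] := uniq_prime_elt cC (isT : prime 2) xC yC x2 y2 ny.
rewrite -expg_mod_order (order_prime (isT : prime 2) y2 ny).
have := ltn_pmod i (isT : 0 < 2); case: (i %% 2) => [|[|]] // _.
  by rewrite expg0 eqxx.
Qed.

Lemma transpE (T : finType) (t : {perm T}) :
  is_transposition t -> exists a b, a != b /\ t = tperm a b.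
Proof. by case/existsP=> a /existsP[b /andP[ab /eqP ->]]; exists a, b. Qed.

Lemma transp_odd (T : finType) (t : {perm T}) : is_transposition t -> odd_perm t.
Proof. by case/transpE=> a [b [ab ->]]; rewrite odd_tperm. Qed.

Lemma transp_sq (T : finType) (t : {perm T}) : is_transposition t -> t ^+ 2 = 1.
Proof. by case/transpE=> a [b [ab ->]]; rewrite expgS expg1 tperm2. Qed.

Lemma transp_prod (T : finType) (t u : {perm T}) :
  is_transposition t -> is_transposition u -> (t * u) ^+ 2 = 1 \/ (t * u) ^+ 3 = 1.
Proof.
case/transpE=> a [b [ab ->]]; case/transpE=> c [d [cd ->]].
have ba : b != a by rewrite eq_sym.
have [e|ca] := eqVneq c a.
  subst c; have [e|db] := eqVneq d b.
    by subst d; left; rewrite tperm2 expg1n.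
  right; rewrite tpermC; apply: tp3; by [|rewrite eq_sym].
have [e|cb] := eqVneq c b.
  subst c; have [e|da] := eqVneq d a.
    by subst d; left; rewrite tpermC tperm2 expg1n.
  right; apply: tp3; by [|rewrite eq_sym].
have [e|da] := eqVneq d a.
  subst d; right; rewrite tpermC (tpermC c a); apply: tp3; by [|rewrite eq_sym].
have [e|db] := eqVneq d b.
  subst d; right; rewrite (tpermC c b); apply: tp3; by [|rewrite eq_sym].
left; apply: tp2; by [|rewrite eq_sym].
Qed.

Lemma part1 (m : nat) (G : {group {perm 'I_m}}) :
  metacyclic G -> #|transpositions_in G| <= 4.
Proof.
case/metacyclicP=> N [cN nNG cGN].
have nN : G \subset 'N(N) by case/andP: nNG.
set Tr := transpositions_in G.
have TrP t : t \in Tr -> [/\ t \in G, t \in 'N(N), odd_perm t, t ^+ 2 = 1 & t != 1].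
  rewrite inE => /andP[tG tt]; split => //; first exact: (subsetP nN).
  - exact: transp_odd.
  - exact: transp_sq.
  by apply: contraTneq (transp_odd tt) => ->; rewrite odd_perm1.
set A := [set x in N | x ^+ 2 == 1]; set B := [set x in N | x ^+ 3 == 1].
have cA : #|A| <= 2 by apply: card_prime_sol.
have cB : #|B| <= 3 by apply: card_prime_sol.
have oneAB : 1 \in A :&: B by rewrite !inE group1 !expg1n eqxx.
have TrN : Tr :&: N \subset A :\ 1.
  apply/subsetP=> t /setIP[/TrP[_ _ _ t2 nt] tN]; by rewrite !inE nt tN t2 eqxx.
have [S0 | [t0 /setDP[t0T t0N]]] := set_0Vmem (Tr :\: N).
  rewrite -(cardsID N Tr) S0 cards0 addn0.
  apply: leq_trans (subset_leq_card TrN) _; apply: leq_trans (subset_leq_card (subsetDl A [set 1])) _.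
  exact: leq_trans cA _.
have [t0G t0NN t0odd t02 t01] := TrP t0 t0T.
have K1 t : t \in Tr :\: N -> t0 * t \in N.
  case/setDP=> tT tN; have [tG tNN todd t2 t1] := TrP t tT.
  have ct1 : coset N t != 1 by apply: contra tN => /eqP; apply: coset_idr.
  have ct01 : coset N t0 != 1 by apply: contra t0N => /eqP; apply: coset_idr.
  have e : coset N t0 = coset N t.
    apply: (uniq_inv2 cGN); rewrite ?mem_quotient // -morphX //= ?t2 ?t02 morph1 //.
  apply: coset_idr; first exact: groupM.
  rewrite morphM //= e -morphM //; change (coset N (t ^+ 2) = 1); by rewrite t2 morph1.
set S := Tr :\: N.
have Kev t : t \in S -> ~~ odd_perm (t0 * t).
  by case/setDP=> /TrP[_ _ todd _ _] _; rewrite odd_permM t0odd todd.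
have KAB t : t \in S -> t0 * t \in A :|: B.
  move=> tS; have [_ _ _ _ _] := TrP t (setDP tS).1.
  case: (transp_prod (setIdP t0T).2 (setIdP (setDP tS).1).2) => e;
    by rewrite !inE K1 // e eqxx ?orbT.
have cS : #|S| = #|[set t0 * t | t in S]| by rewrite card_imset //; apply: mulgI.
rewrite -(cardsID N Tr).
have [TN0 | [s /setIP[sT sN]]] := set_0Vmem (Tr :&: N).
  rewrite TN0 cards0 add0n -/S cS; apply: leq_trans (subset_leq_card (_ : _ \subset A :|: B)) _.
    by apply/subsetP=> x /imsetP[t tS ->]; apply: KAB.
  have := cardsUI A B; have := subset_leq_card (introT idP (etrans (sub1set (A :&: B) 1) oneAB)); rewrite cards1.
  move=> h1 h2; rewrite -ltnS -addn1.
  apply: (@leq_trans (#|A :|: B| + #|A :&: B|)); first by rewrite leq_add2l.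
  by rewrite h2 (leq_add cA cB).
have [_ _ sodd s2 s1] := TrP s sT.
have c1 : #|Tr :&: N| <= 1.
  apply: leq_trans (subset_leq_card TrN) _.
  have := cardsD1 1 A; rewrite (setIP oneAB).1 add1n => eA.
  by rewrite -ltnS -eA.
have c2 : #|S| <= 3.
  rewrite cS; apply: leq_trans (subset_leq_card (_ : _ \subset B)) cB.
  apply/subsetP=> x /imsetP[t tS ->].
  have := KAB t tS; rewrite inE => /orP[|//].
  rewrite inE => /andP[xN x2]; rewrite inE xN.
  have [e1 | nx] := eqVneq (t0 * t) 1; first by rewrite e1 expg1n eqxx.
  have e := uniq_inv2 cN xN sN (eqP x2) s2 nx s1.
  by move: (Kev t tS); rewrite e sodd.
by rewrite -/S (leq_add c1 c2).
Qed.

Lemma pt5E k (h : k < 5) : pt5 k = Ordinal h.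
Proof. by apply/val_inj; rewrite /= inordK. Qed.

Ltac evalp :=
  rewrite ?permM ?perm1 /gen_a /gen_b ?permM ;
  rewrite !(pt5E (isT : 0 < 5)) !(pt5E (isT : 1 < 5)) !(pt5E (isT : 2 < 5))
          !(pt5E (isT : 3 < 5)) !(pt5E (isT : 4 < 5)) /tperm !permE;
  apply/val_inj; vm_compute; reflexivity.

Lemma t2 : gen_b * gen_a * gen_b * gen_a = 1.
Proof. apply/permP => i; case: i => [[|[|[|[|[|//]]]]] h]; evalp. Qed.

Definition P3 : {set 'I_5} := [set pt5 0; pt5 1; pt5 2].

Ltac pt5s := rewrite ?(pt5E (isT : 0 < 5)) ?(pt5E (isT : 1 < 5)) ?(pt5E (isT : 2 < 5))
   ?(pt5E (isT : 3 < 5)) ?(pt5E (isT : 4 < 5)).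

Lemma a_stab : gen_a \in 'N(P3 | 'P).
Proof.
apply/astabsP => i; rewrite /= apermE /P3 !inE /gen_a ?permM; pt5s; rewrite /tperm !permE.
case: i => [[|[|[|[|[|//]]]]] h]; vm_compute; reflexivity.
Qed.

Lemma b_stab : gen_b \in 'N(P3 | 'P).
Proof.
apply/astabsP => i; rewrite /= apermE /P3 !inE /gen_b ?permM; pt5s; rewrite /tperm !permE.
case: i => [[|[|[|[|[|//]]]]] h]; vm_compute; reflexivity.
Qed.

Lemma tp_in_stab (x y : 'I_5) : x != y -> tperm x y \in 'N(P3 | 'P) ->
  tperm x y \in [set tperm (pt5 0) (pt5 1); tperm (pt5 1) (pt5 2);
          tperm (pt5 0) (pt5 2); tperm (pt5 3) (pt5 4)].
Proof.
move=> xy st; have := astabs_act x st; rewrite /= apermE tpermL /P3 !inE.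
move: xy st; pt5s.
case: x => [[|[|[|[|[|//]]]]] hx]; case: y => [[|[|[|[|[|//]]]]] hy] //= _ _ E;
  try (by exfalso; move: E; vm_compute; discriminate);
  rewrite (bool_irrelevance hx isT) (bool_irrelevance hy isT);
  try (by rewrite ?eqxx ?orbT);
  by rewrite tpermC ?eqxx ?orbT.
Qed.

Ltac evalp2 :=
  apply/permP => -[[|[|[|[|[|//]]]]] ?];
  rewrite ?permM ?perm1 /gen_a /gen_b ?permM; pt5s; rewrite /tperm !permE;
  apply/val_inj; vm_compute; reflexivity.

Lemma e1 : gen_b * gen_a * gen_b * gen_a = 1. Proof. evalp2. Qed.
Lemma e2 : tperm (pt5 0) (pt5 2) = gen_a * gen_a * gen_a * gen_a * gen_a * gen_b * gen_a.
Proof. evalp2. Qed.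
Lemma e3 : tperm (pt5 1) (pt5 2) = gen_a * gen_a * gen_a * gen_a * gen_b * gen_a * gen_a.
Proof. evalp2. Qed.
Lemma e4 : tperm (pt5 3) (pt5 4) = gen_a * gen_a * gen_a.
Proof. evalp2. Qed.

Lemma part2 : metacyclic example_group /\
   transpositions_in example_group =
     [set tperm (pt5 0) (pt5 1); tperm (pt5 1) (pt5 2);
          tperm (pt5 0) (pt5 2); tperm (pt5 3) (pt5 4)].
Proof.
set G := example_group; set a := gen_a; set b := gen_b.
have aG : a \in G by apply: mem_gen; rewrite !inE eqxx.
have bG : b \in G by apply: mem_gen; rewrite !inE eqxx orbT.
have e1 : b * a * b * a = 1 := e1.
have aJ : a ^ b = a^-1.
  rewrite /conjg (_ : b^-1 = b); last exact: tpermV.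
  by apply/eqP; rewrite eq_mulgV1 invgK (mulgA b a b) e1.
have nH : G \subset 'N(<[a]>).
  rewrite gen_subG; apply/subsetP=> x /set2P[] ->.
    exact: (subsetP (normG _)) (cycle_id a).
  by apply/normP; rewrite -cycleJ aJ cycleV.
split.
  apply/metacyclicP; exists <[a]>%G; split; first exact: cycle_cyclic.
    by rewrite /normal cycle_subG aG nH.
  apply: (cyclicS _ (cycle_cyclic (coset <[a]> b))).
  rewrite sub_morphim_pre //= gen_subG; apply/subsetP=> x /set2P[] ->.
    apply: mem_morphpre; first exact: (subsetP nH).
    by rewrite /= coset_id ?cycle_id // group1.
  by apply: mem_morphpre; [exact: (subsetP nH) | exact: cycle_id].
apply/setP=> t; apply/idP/idP.
  rewrite inE => /andP[tG /existsP[x /existsP[y /andP[xy /eqP te]]]].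
  rewrite te; apply: tp_in_stab => //; rewrite -te.
  have sG : G \subset 'N(P3 | 'P).
    rewrite gen_subG; apply/subsetP=> z /set2P[] ->.
      exact: a_stab.
    exact: b_stab.
  exact: (subsetP sG).
have istp (x y : 'I_5) : x != y -> is_transposition (tperm x y).
  by move=> xy; apply/existsP; exists x; apply/existsP; exists y; rewrite xy eqxx.
have e2 : tperm (pt5 0) (pt5 2) = a * a * a * a * a * b * a := e2.
have e3 : tperm (pt5 1) (pt5 2) = a * a * a * a * b * a * a := e3.
have e4 : tperm (pt5 3) (pt5 4) = a * a * a := e4.
rewrite !inE -!orbA => /or4P[] /eqP ->.
all: apply/andP; split; last by apply: istp; pt5s.
- exact: bG.
- by rewrite e3; repeat (apply: groupM; try exact: aG; try exact: bG).
- by rewrite e2; repeat (apply: groupM; try exact: aG; try exact: bG).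
- by rewrite e4; repeat (apply: groupM; try exact: aG; try exact: bG).
Qed.

Local Close Scope group_scope.

Theorem mainTheorem12 :
  (forall (m : nat) (G : {group {perm 'I_m}}),
      metacyclic G -> #|transpositions_in G| <= 4)
  /\
  (metacyclic example_group /\
   transpositions_in example_group =
     [set tperm (pt5 0) (pt5 1); tperm (pt5 1) (pt5 2);
          tperm (pt5 0) (pt5 2); tperm (pt5 3) (pt5 4)]).
Proof. split; [exact: part1 | exact: part2]. Qed.
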